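(* Let $(A,C,k)$ be an approval-based multiwinner instance with $n$ voters, and let $W \subseteq C$ be an affordable committee. Then $\mathrm{cov}(W) \ge \frac{|W|}{k}\, n$.
   Context: An instance $(A,C,k)$ consists of a finite nonempty candidate set $C$, voters $N=\{1,\dots,n\}$ with $n\ge 1$, an approval set $A_i\subseteq C$ for each voter $i$, and a committee size $k$ with $1\le k\le |C|$. For $c\in C$ let $N_c=\{i\in N: c\in A_i\}$. A committee is a set $W\subseteq C$ with $|W|\le k$. The coverage is $\mathrm{cov}(W)=|\{i\in N: A_i\cap W\neq\emptyset\}|$. A payment system assigns to each voter $i$ a function $p_i:C\to\mathbb{R}_{\ge 0}$. A committee $W$ is affordable if there is a payment system with: (C1) $p_i(c)=0$ whenever $c\notin A_i$; (C2) $\sum_{c\in C}p_i(c)\le k/n$ for every $i\in N$; (C3) $\sum_{i\in N}p_i(c)=1$ for every $c\in W$; (C4) $\sum_{i\in N}p_i(c)=0$ for every $c\notin W$. *)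

(* Defs.v *)
From mathcomp Require Import all_boot all_order all_algebra.
Set Implicit Arguments. Unset Strict Implicit. Unset Printing Implicit Defensive.
Import Order.TTheory GRing.Theory Num.Theory.
Local Open Scope ring_scope.

Definition cov (C : finType) (n : nat) (A : 'I_n -> {set C}) (W : {set C}) : nat :=
  #|[set i : 'I_n | A i :&: W != set0]|.

Definition is_affording_payment (R : realFieldType) (C : finType) (n : nat)
    (A : 'I_n -> {set C}) (k : nat) (W : {set C}) (p : 'I_n -> C -> R) : Prop :=
  (forall i c, 0 <= p i c) /\
  (forall i c, c \notin A i -> p i c = 0) /\
  (forall i, \sum_(c : C) p i c <= k%:R / n%:R) /\
  (forall c, c \in W -> \sum_(i : 'I_n) p i c = 1) /\
  (forall c, c \notin W -> \sum_(i : 'I_n) p i c = 0).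

Definition affordable (R : realFieldType) (C : finType) (n : nat)
    (A : 'I_n -> {set C}) (k : nat) (W : {set C}) : Prop :=
  (#|W| <= k)%N /\ exists p : 'I_n -> C -> R, is_affording_payment A k W p.

(* Main.v *)
Require Import Defs.
From mathcomp Require Import all_boot all_order all_algebra.
Import Order.TTheory GRing.Theory Num.Theory.
Local Open Scope ring_scope.

Theorem mainTheorem1 (R : realFieldType) (C : finType) (n : nat)
    (A : 'I_n -> {set C}) (k : nat) (W : {set C}) :
  (0 < #|C|)%N -> (1 <= n)%N -> (1 <= k <= #|C|)%N ->
  affordable R A k W ->
  (cov A W)%:R >= (#|W|%:R / k%:R) * n%:R :> R.
Proof.
move=> _ Hn /andP[Hk _] [_ [p [Hp0 [HpA [Hpb [HpW _]]]]]].
set S := [set i : 'I_n | A i :&: W != set0].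
have E1 : #|W|%:R = \sum_(i : 'I_n) \sum_(c in W) p i c :> R.
  rewrite exchange_big /= -sum1_card natr_sum.
  by apply: eq_bigr => c cW; rewrite HpW.
have E2 : \sum_(i : 'I_n) \sum_(c in W) p i c
          <= \sum_(i : 'I_n) (if i \in S then k%:R / n%:R else 0) :> R.
  apply: ler_sum => i _; case: ifP => iS.
    apply: le_trans (Hpb i).
    rewrite [X in _ <= X](bigID (fun c => c \in W)) /= lerDl.
    by apply: sumr_ge0 => c _; apply: Hp0.
  rewrite big1 // => c cW; apply: HpA; apply/negP => cA.
  move: iS; rewrite inE => /negbFE/eqP/setP/(_ c).
  by rewrite !inE cA cW.
rewrite -big_mkcond /= sumr_const in E2.
have H : #|W|%:R <= (cov A W)%:R * (k%:R / n%:R) :> R.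
  by rewrite E1 mulr_natl; exact: E2.
have kp : 0 < k%:R :> R by rewrite ltr0n.
have np : 0 < n%:R :> R by rewrite ltr0n.
rewrite -ler_pdivlMr // ler_pdivrMr //.
by rewrite mulrAC -mulrA.
Qed.
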